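(* Let $m,n\in\mathbb{N}$ and let $G=K_{1,m,n}$ be the complete tripartite graph with parts of sizes $1,m,n$. Then: (1) if $m=1$, $G$ is an $\mathcal{N}$ position for Grim if and only if $n$ is even; (2) if $m=2$ and $n\geq 2$, $G$ is an $\mathcal{N}$ position; (3) if $m,n\geq 3$, $G$ is an $\mathcal{N}$ position if and only if $m+n$ is even.
   Context: Grim is a two-player game on a finite simple undirected graph. Any isolated vertices of the starting graph are deleted before play begins. Players alternate moves; a move consists of selecting a vertex of the current graph and deleting it together with all its incident edges, after which every vertex that has become isolated is also deleted. The player who makes the last legal move wins (a player facing the empty graph has no move and loses). A graph is an $\mathcal{N}$ position if the player about to move has a winning strategy, and a $\mathcal{P}$ position otherwise. *)

(* Defs.v *)
From mathcomp Require Import all_boot.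


(* A finite simple graph: vertex type T : finType, edge relation e
   (assumed symmetric and irreflexive where relevant).  A position of Grim
   is a vertex set S : {set T}; the current graph is the induced subgraph. *)

Definition has_nbr (T : finType) (e : rel T) (S : {set T}) (v : T) : bool :=
  [exists u in S, e v u].

Definition del_isolated (T : finType) (e : rel T) (S : {set T}) : {set T} :=
  [set v in S | @has_nbr T e S v].

Definition grim_move (T : finType) (e : rel T) (S : {set T}) (v : T) : {set T} :=
  @del_isolated T e (S :\ v).

Fixpoint grim_win_fuel (T : finType) (e : rel T) (k : nat) (S : {set T}) : bool :=
  match k with
  | 0 => false
  | k'.+1 => [exists v in S, ~~ @grim_win_fuel T e k' (@grim_move T e S v)]
  end.

(* every move strictly decreases #|S|, so fuel #|S| suffices *)
Definition grim_N_pos (T : finType) (e : rel T) (S : {set T}) : bool :=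
  @grim_win_fuel T e #|S| S.

Definition grim_N (T : finType) (e : rel T) : bool :=
  @grim_N_pos T e (@del_isolated T e [set: T]).

(* complete tripartite graph K_{1,m,n} on 'I_(1+m+n):
   part 0 = {0}, part 1 = {1..m}, part 2 = {m+1..m+n} *)
Definition tri_part (m n : nat) (i : 'I_(1 + m + n)) : nat :=
  if (i < 1)%N then 0 else if (i < 1 + m)%N then 1 else 2.

Definition K1mn (m n : nat) : rel 'I_(1 + m + n) :=
  fun i j => @tri_part m n i != @tri_part m n j.
Arguments K1mn m n : clear implicits.
Arguments grim_N {T} e.

(* Main.v *)
Require Import Defs.
From mathcomp Require Import all_boot.

Definition P (a b c : nat) : bool :=
  if a == 0 then [&& 0 < b, 0 < c & [|| b == 1, c == 1 | odd (b + c)]]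
  else if b == 0 then 0 < c else if c == 0 then 0 < b
  else if b == 1 then ~~ odd c else if c == 1 then ~~ odd b
  else if (b == 2) || (c == 2) then true else ~~ odd (b + c).

Definition R (a b c : nat) : bool :=
  [|| (0 < a) && ~~ P a.-1 b c, (0 < b) && ~~ P a b.-1 c | (0 < c) && ~~ P a b c.-1].

Definition deadc a b c :=
  [|| (a == 0) && (b == 0), (a == 0) && (c == 0) | (b == 0) && (c == 0)].

Lemma PR a b c : a <= 1 -> ~~ deadc a b c -> P a b c = R a b c.
Proof.
rewrite /deadc.
case: a => [|[|a]] // _;
case: b => [|[|[|[|b]]]]; case: c => [|[|[|[|c]]]] //;
rewrite /R /P /= ?addnS ?addSn /= ?oddD ?addn0 ?addnS /= ?oddD;
try (case: (odd b)); try (case: (odd c)); by [].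
Qed.

Lemma P_dead a b c : a <= 1 -> deadc a b c -> P a b c = false.
Proof.
rewrite /deadc.
case: a => [|[|a]] // _;
case: b => [|b]; case: c => [|c] //.
Qed.

Definition cnt (T : finType) (tp : T -> nat) (S : {set T}) p :=
  #|[set i in S | tp i == p]|.

Arguments cnt {T}.

Definition dead (T : finType) (tp : T -> nat) S :=
  deadc (cnt tp S 0) (cnt tp S 1) (cnt tp S 2).

Arguments dead {T}.

Lemma cnt_set0 (T : finType) (tp : T -> nat) p : cnt tp set0 p = 0.
Proof.
rewrite /cnt; apply/eqP; rewrite cards_eq0; apply/eqP/setP => x; by rewrite !inE.
Qed.
Arguments cnt_set0 {T} tp p.

Lemma cnt_mem (T : finType) (tp : T -> nat) (S : {set T}) v : v \in S -> 0 < cnt tp S (tp v).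
Proof.
move=> vS; rewrite /cnt card_gt0; apply/set0Pn; exists v; by rewrite inE vS eqxx.
Qed.
Arguments cnt_mem {T} tp {S v}.

Lemma cnt_pos (T : finType) (tp : T -> nat) (S : {set T}) q : 0 < cnt tp S q ->
  exists2 u, u \in S & tp u == q.
Proof.
rewrite /cnt card_gt0 => /set0Pn [u]; rewrite inE => /andP[uS hu]; by exists u.
Qed.
Arguments cnt_pos {T tp S q}.

Lemma cnt_le (T : finType) (tp : T -> nat) (S : {set T}) p :
  cnt tp S p <= #|[set i | tp i == p]|.
Proof.
apply: subset_leq_card; apply/subsetP => x; rewrite !inE => /andP[_ ->] //.
Qed.
Arguments cnt_le {T} tp S p.

Lemma move_cnt (T : finType) (tp : T -> nat) (S : {set T}) v p : v \in S ->
  cnt tp (S :\ v) p = if tp v == p then (cnt tp S p).-1 else cnt tp S p.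
Proof.
move=> vS; rewrite /cnt; case: ifP => hv.
- have ->: [set i in S :\ v | tp i == p] = [set i in S | tp i == p] :\ v.
    by apply/setP => i; rewrite !inE andbA.
  by rewrite (cardsD1 v [set i in S | tp i == p]) inE vS hv.
- have -> //: [set i in S :\ v | tp i == p] = [set i in S | tp i == p].
  apply/setP => i; rewrite !inE.
  case: (eqVneq i v) => [->|] //=; by rewrite hv andbF.
Qed.
Arguments move_cnt {T} tp {S v} p.

Lemma del_iso (T : finType) (tp : T -> nat) (htp : forall i, tp i < 3) (S : {set T}) :
  del_isolated _ (fun u v => tp u != tp v) S = if dead tp S then set0 else S.
Proof.
apply/setP => v; rewrite /del_isolated inE /has_nbr.
case: ifP => hd; rewrite ?inE.
- apply/negP => /andP[vS /exists_inP[u uS hne]].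
  have cv := cnt_mem tp vS; have cu := cnt_mem tp uS.
  move: (htp v) (htp u) hne cv cu hd; rewrite /dead /deadc.
  case: (tp v) => [|[|[|//]]]; case: (tp u) => [|[|[|//]]] //= _ _ _;
  case: (cnt tp S 0) => [|a]; case: (cnt tp S 1) => [|b]; case: (cnt tp S 2) => [|c] //.
- case vS: (v \in S) => //=.
  have [q /andP[hq cq]]: exists q, (q != tp v) && (0 < cnt tp S q).
    move: hd (htp v); rewrite /dead /deadc.
    case h0: (cnt tp S 0) => [|a]; case h1: (cnt tp S 1) => [|b];
    case h2: (cnt tp S 2) => [|c] //= _;
    case: (tp v) => [|[|[|//]]] _;
    first [by exists 0; rewrite h0 | by exists 1; rewrite h1 | by exists 2; rewrite h2].
  have [u uS /eqP tu] := cnt_pos cq.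
  apply/exists_inP; exists u => //; by rewrite tu eq_sym.
Qed.
Arguments del_iso {T} tp htp S.

Lemma P_norm (T : finType) (tp : T -> nat) (htp : forall i, tp i < 3) (X : {set T}) :
  cnt tp X 0 <= 1 ->
  let Y := del_isolated _ (fun u v => tp u != tp v) X in
  P (cnt tp Y 0) (cnt tp Y 1) (cnt tp Y 2) = P (cnt tp X 0) (cnt tp X 1) (cnt tp X 2).
Proof.
move=> h0 /=; rewrite del_iso //; case: ifP => hd //.
by rewrite !cnt_set0 (P_dead _ _ _ h0 hd).
Qed.
Arguments P_norm {T} tp htp X.

Lemma main (T : finType) (tp : T -> nat) (htp : forall i, tp i < 3)
  (h0 : #|[set i | tp i == 0]| <= 1) k (S : {set T}) :
  #|S| <= k -> ~~ dead tp S || (S == set0) ->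
  grim_win_fuel _ (fun u v => tp u != tp v) k S = P (cnt tp S 0) (cnt tp S 1) (cnt tp S 2).
Proof.
have c0 : forall X, cnt tp X 0 <= 1 by move=> X; exact: leq_trans (cnt_le _ _ _) h0.
elim: k S => [|k IH] S hS hN /=.
  have -> : S = set0 by apply/eqP; rewrite -cards_eq0 -leqn0.
  by rewrite !cnt_set0.
have step : forall v, v \in S ->
    grim_win_fuel _ (fun u v => tp u != tp v) k (grim_move _ (fun u v => tp u != tp v) S v)
    = P (cnt tp (S :\ v) 0) (cnt tp (S :\ v) 1) (cnt tp (S :\ v) 2).
  move=> v vS; rewrite IH.
  - by rewrite /grim_move P_norm.
  - have h1 : #|grim_move _ (fun u v => tp u != tp v) S v| <= #|S :\ v|.
      by apply: subset_leq_card; apply/subsetP => x; rewrite /grim_move /del_isolated inE => /andP[].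
    apply: leq_trans h1 _; by move: hS; rewrite (cardsD1 v S) vS add1n ltnS.
  - rewrite /grim_move del_iso //; case: ifP => hd; [by rewrite eqxx orbT | by rewrite hd].
case: (eqVneq S set0) => [->|hS0].
  by rewrite !cnt_set0; apply/negbTE/existsP => -[x]; rewrite inE.
move: hN; rewrite (negbTE hS0) orbF => hN.
rewrite PR //; apply/idP/idP.
- move=> /exists_inP[v vS]; rewrite step // !move_cnt // => hv.
  have cv := cnt_mem tp vS.
  move: (htp v) hv cv; case: (tp v) => [|[|[|//]]] _ /= hv cv; by rewrite /R cv hv ?orbT.
- rewrite /R => /or3P[/andP[cq hv] | /andP[cq hv] | /andP[cq hv]];
  have [u uS /eqP tu] := cnt_pos cq; apply/exists_inP; exists u => //;
  by rewrite step // !move_cnt // tu.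
Qed.

Lemma cnt_iota N (p : pred nat) : #|[set i : 'I_N | p (val i)]| = count p (iota 0 N).
Proof.
rewrite cardsE cardE -val_enum_ord count_map /enum_mem size_filter /=.
rewrite [X in _ = count _ X](@eq_filter _ _ predT) ?filter_predT //.
Qed.

Lemma count_const (b : bool) (s : seq nat) : count (fun _ => b) s = b * size s.
Proof. elim: s => [|x s IH] /=; first by rewrite muln0. by rewrite IH; case: (b) => /=; rewrite ?mul1n ?mul0n. Qed.

Definition tpn m x := if x < 1 then 0 else if x < 1 + m then 1 else 2.

Lemma cnt_T m n p : p < 3 ->
  cnt (tri_part m n) [set: 'I_(1 + m + n)] p = nth 0 [:: 1; m; n] p.
Proof.
move=> hp.
have -> : cnt (tri_part m n) [set: 'I_(1 + m + n)] p =
          #|[set i : 'I_(1 + m + n) | (fun x => tpn m x == p) (val i)]|.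
  by rewrite /cnt; apply: eq_card => i; rewrite !inE.
rewrite (cnt_iota _ (fun x => tpn m x == p)) iotaD iotaD !count_cat.
have -> : count (fun x => tpn m x == p) (iota (0 + 1) m) = (p == 1) * m.
  rewrite (@eq_in_count _ _ (fun _ => p == 1)).
    by rewrite count_const size_iota.
  move=> x; rewrite mem_iota /tpn !add0n => /andP[h1 h2]; rewrite ltnNge h1 /=.
  by rewrite h2 eq_sym.
have -> : count (fun x => tpn m x == p) (iota (0 + (1 + m)) n) = (p == 2) * n.
  rewrite (@eq_in_count _ _ (fun _ => p == 2)).
    by rewrite count_const size_iota.
  move=> x; rewrite mem_iota /tpn => /andP[h1 _]; rewrite add0n in h1.
  have h1' : 0 < x by apply: leq_trans h1; rewrite add1n.
  by rewrite ltnNge h1' /= ltnNge h1 /= eq_sym.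
by case: p hp => [|[|[|]]] //= _; rewrite ?mul0n ?mul1n ?addn0.
Qed.

Theorem lemma3p3 (m n : nat) :
  (m = 1 -> (grim_N (K1mn m n) <-> ~~ odd n)) /\
  (m = 2 -> 2 <= n -> grim_N (K1mn m n)) /\
  (3 <= m -> 3 <= n -> (grim_N (K1mn m n) <-> ~~ odd (m + n))).
Proof.
have htp : forall i, tri_part m n i < 3.
  by move=> i; rewrite /tri_part; case: ifP => //; case: ifP.
have h0 : #|[set i | tri_part m n i == 0]| <= 1.
  have -> : [set i | tri_part m n i == 0] = [set i : 'I_(1 + m + n) | (fun x => tpn m x == 0) (val i)].
    by apply/setP => i; rewrite !inE.
  rewrite (cnt_iota _ (fun x => tpn m x == 0)) iotaD iotaD !count_cat /=.
  rewrite (@eq_in_count _ _ pred0); last first.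
    by move=> x; rewrite mem_iota /tpn => /andP[h1 _]; rewrite ltnNge h1 /=; case: ifP.
  rewrite (@eq_in_count _ _ pred0 (iota _ n)); last first.
    move=> x; rewrite mem_iota /tpn => /andP[h1 _].
    have h1' : 0 < x by apply: leq_trans h1; rewrite add0n add1n.
    by rewrite ltnNge h1' /=; case: ifP.
  by rewrite !count_pred0.
have G : grim_N (K1mn m n) = P 1 m n.
  rewrite /grim_N /grim_N_pos.
  change (K1mn m n) with (fun u v => tri_part m n u != tri_part m n v).
  rewrite main //.
  - rewrite P_norm //; last by rewrite cnt_T.
    by rewrite !cnt_T.
  - rewrite del_iso //; case: ifP => hd; [by rewrite eqxx orbT | by rewrite hd].
rewrite G; clear G htp h0; split; [|split].
- move=> ->; rewrite /P /=; case: n => [|[|n]] //.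
- move=> -> hn; rewrite /P /=; case: n hn => [|[|n]] //.
- move=> hm hn; rewrite /P /=.
  case: m hm => [|[|[|m]]] //; case: n hn => [|[|[|n]]] //.
Qed.
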